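(* Let $f\in\mathbb{C}_v(z)$ be a nonconstant rational function such that all poles and all type I critical points of $f$ lie in the Berkovich Fatou set of $f$. Then there exists $\epsilon>0$ such that for every $a\in\mathbb{C}_v$ with $D_{\mathrm{Berk}}(a,\epsilon)\cap\mathcal{J}_f\neq\varnothing$ and every $r$ with $0<r\le\epsilon$, $f$ maps $D(a,r)$ bijectively onto $D(f(a),|f'(a)|r)$.
   Context: $\mathbb{C}_v$ is an algebraically closed field of characteristic zero, complete with respect to a nontrivial non-archimedean absolute value. $D(a,r)=\{x\in\mathbb{C}_v:|x-a|<r\}$; $D_{\mathrm{Berk}}(a,r)=\{\zeta\in\mathbb{A}^1_{\mathrm{Berk}}:\|z-a\|_\zeta<r\}$, where points of the Berkovich affine line are multiplicative seminorms on $\mathbb{C}_v[z]$ extending $|\cdot|$. Berkovich Fatou set of $f$: points of $\mathbb{P}^1_{\mathrm{Berk}}$ having a neighborhood $V$ such that $\bigcup_{n\ge1}f^n(V)$ omits infinitely many points; the Berkovich Julia set $\mathcal{J}_f$ is its complement. *)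

(* Defs.v *)
From HB Require Import structures.
From mathcomp Require Import all_boot all_order all_algebra.
From mathcomp Require Import boolp classical_sets functions cardinality reals.
Set Implicit Arguments. Unset Strict Implicit. Unset Printing Implicit Defensive.
Import Order.TTheory GRing.Theory Num.Theory.
Local Open Scope classical_set_scope.
Local Open Scope ring_scope.

Section Defs.
Variables (R : realType) (K : closedFieldType) (abs : K -> R).

Definition is_nonarch_abs : Prop :=
  [/\ forall x, 0 <= abs x,
      forall x, abs x = 0 <-> x = 0,
      forall x y, abs (x * y) = abs x * abs y,
      forall x y, abs (x + y) <= Num.max (abs x) (abs y)
    & exists x, abs x != 0 /\ abs x != 1].

Definition abs_complete : Prop :=
  forall u : nat -> K,
    (forall e : R, 0 < e -> exists N, forall m n, (N <= m)%N -> (N <= n)%N ->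
        abs (u m - u n) < e) ->
    exists l, forall e : R, 0 < e -> exists N, forall n, (N <= n)%N ->
        abs (u n - l) < e.

Definition disk (a : K) (r : R) : set K := [set x | abs (x - a) < r].

Definition ratdeg (P Q : {poly K}) : nat := (maxn (size P) (size Q)).-1.

(* f evaluated at a finite point (meaningful when Q.[x] != 0) *)
Definition rat_eval (P Q : {poly K}) (x : K) : K := P.[x] / Q.[x].

Definition rat_deriv (P Q : {poly K}) (x : K) : K :=
  (P^`() * Q - P * Q^`()).[x] / (Q.[x] ^+ 2).

(* P^1(C_v) = option K, None = infinity; classical action of f *)
Definition rat_P1 (P Q : {poly K}) (x : option K) : option K :=
  match x with
  | Some x => if Q.[x] == 0 then None else Some (rat_eval P Q x)
  | None => if (size Q < size P)%N then None
            else if size P == size Q then Some (lead_coef P / lead_coef Q)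
            else Some 0
  end.

Definition is_pole (P Q : {poly K}) (x : option K) : Prop := rat_P1 P Q x = None.

(* Wronskian numerator of the derivative of P/Q; its roots are exactly the
   finite points where f (or 1/f at poles) has vanishing derivative. *)
Definition wronsk (P Q : {poly K}) : {poly K} := P^`() * Q - P * Q^`().

(* coordinate change w = 1/z: f(1/w) = rev_d P / rev_d Q, d = deg f *)
Definition revd (d : nat) (P : {poly K}) : {poly K} := \poly_(i < d.+1) P`_(d - i).

(* type I critical point of f in P^1(C_v): the derivative of f in local
   coordinates (z or 1/z at the source, w or 1/w at the target) vanishes. *)
Definition is_crit (P Q : {poly K}) (x : option K) : Prop :=
  match x with
  | Some x => root (wronsk P Q) x
  | None => root (wronsk (revd (ratdeg P Q) P) (revd (ratdeg P Q) Q)) 0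
  end.

(* points of A^1_Berk: multiplicative seminorms on K[z] extending abs *)
Definition is_berk (z : {poly K} -> R) : Prop :=
  [/\ forall c, z c%:P = abs c,
      forall p, 0 <= z p,
      forall p q, z (p * q) = z p * z q
    & forall p q, z (p + q) <= z p + z q].

(* P^1_Berk = A^1_Berk together with infinity (None) *)
Definition berkP1 := option ({poly K} -> R).
Definition is_berkP1 (p : berkP1) : Prop :=
  match p with Some z => is_berk z | None => True end.

Definition typeI (a : K) : {poly K} -> R := fun g => abs g.[a].
Definition typeI_P1 (x : option K) : berkP1 :=
  match x with Some a => Some (typeI a) | None => None end.

Definition berk_disk (a : K) (r : R) : set ({poly K} -> R) :=
  [set z | is_berk z /\ z ('X - a%:P) < r].

(* Topology of P^1_Berk: A^1_Berk carries the weakest topology making all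
   z |-> z g continuous (basic opens: finite intersections of
   {a < z g < b}); P^1_Berk is its one-point compactification, where
   {infinity} u {z | z X > M} form a neighbourhood basis of infinity. *)
Definition berk_nbhd (p : berkP1) (V : set berkP1) : Prop :=
  match p with
  | Some z => exists s : seq ({poly K} * R * R),
      (forall t, t \in s -> t.1.2 < z t.1.1 < t.2) /\
      forall w, is_berk w ->
        (forall t, t \in s -> t.1.2 < w t.1.1 < t.2) -> V (Some w)
  | None => exists M : R, V None /\
      forall w, is_berk w -> M < w 'X -> V (Some w)
  end.

(* g(P/Q) homogenized: Q^{deg g} g(P/Q) *)
Definition hcomp (g P Q : {poly K}) : {poly K} :=
  \sum_(i < size g) g`_i *: (P ^+ i * Q ^+ ((size g).-1 - i)).

(* action of f on P^1_Berk: ||g||_{f(z)} = ||g o f||_z *)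
Definition berk_map (P Q : {poly K}) (p : berkP1) : berkP1 :=
  match p with
  | Some z => if z Q == 0 then None
              else Some (fun g => z (hcomp g P Q) / z Q ^+ (size g).-1)
  | None => typeI_P1 (rat_P1 P Q None)
  end.

Definition berk_fatou (P Q : {poly K}) (p : berkP1) : Prop :=
  is_berkP1 p /\
  exists V : set berkP1, V `<=` is_berkP1 /\ berk_nbhd p V /\
    infinite_set (is_berkP1 `\`
       [set q | exists n p', V p' /\ q = iter n.+1 (berk_map P Q) p']).

Definition berk_julia (P Q : {poly K}) (p : berkP1) : Prop :=
  is_berkP1 p /\ ~ berk_fatou P Q p.

End Defs.

(* Main.v *)
Require Import Defs.
From HB Require Import structures.
From mathcomp Require Import all_boot all_order all_algebra.
From mathcomp Require Import boolp classical_sets functions cardinality reals.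
From mathcomp Require Import ring lra.
Set Implicit Arguments. Unset Strict Implicit. Unset Printing Implicit Defensive.
Import Order.TTheory GRing.Theory Num.Theory.
Local Open Scope classical_set_scope.
Local Open Scope ring_scope.


Section Ultra.
Variables (R : realType) (K : closedFieldType) (abs : K -> R).
Hypothesis habs : is_nonarch_abs abs.

Lemma abs_ge0 x : 0 <= abs x. Proof. by case: habs. Qed.
Lemma abs_eq0 x : abs x = 0 <-> x = 0. Proof. by case: habs. Qed.
Lemma absM x y : abs (x * y) = abs x * abs y. Proof. by case: habs. Qed.
Lemma absD x y : abs (x + y) <= Num.max (abs x) (abs y). Proof. by case: habs. Qed.
Lemma abs0 : abs 0 = 0. Proof. exact/abs_eq0. Qed.
Lemma abs_neq0 x : x != 0 -> 0 < abs x.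
Proof.
move=> hx; rewrite lt_def abs_ge0 andbT; apply/eqP => /abs_eq0 h.
by rewrite h eqxx in hx.
Qed.
Lemma abs1 : abs 1 = 1.
Proof.
have h1 : 0 < abs 1 by apply: abs_neq0; exact: oner_neq0.
have := absM 1 1; rewrite mulr1 => h.
have : abs 1 * (abs 1 - 1) = 0 by rewrite mulrBr mulr1 -h subrr.
move/eqP; rewrite mulf_eq0 subr_eq0 => /orP [/eqP h0|/eqP //].
by move: h1; rewrite h0 ltxx.
Qed.
Lemma absN x : abs (- x) = abs x.
Proof.
have hm1 : abs (-1) = 1.
  have h : abs (-1) * abs (-1) = 1 by rewrite -absM mulrNN mulr1 abs1.
  have hp : 0 <= abs (-1) := abs_ge0 _.
  have : (abs (-1) - 1) * (abs (-1) + 1) = 0 by rewrite mulrDr mulrBl h mul1r mulr1; ring.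
  move/eqP; rewrite mulf_eq0 subr_eq0 => /orP [/eqP //|].
  rewrite addr_eq0 => /eqP hh; move: hp; rewrite hh lerNr oppr0 ler10 //.
by rewrite -mulN1r absM hm1 mul1r.
Qed.
Lemma absB x y : abs (x - y) = abs (y - x).
Proof. by rewrite -absN opprB. Qed.
Lemma absD_le x y b : abs x <= b -> abs y <= b -> abs (x + y) <= b.
Proof. move=> hx hy; apply: le_trans (absD x y) _; by rewrite ge_max hx hy. Qed.
Lemma absD_lt x y b : abs x < b -> abs y < b -> abs (x + y) < b.
Proof. move=> hx hy; apply: le_lt_trans (absD x y) _; by rewrite gt_max hx hy. Qed.
Lemma absB_le x y b : abs x <= b -> abs y <= b -> abs (x - y) <= b.
Proof. by move=> hx hy; apply: absD_le => //; rewrite absN. Qed.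
Lemma absB_lt x y b : abs x < b -> abs y < b -> abs (x - y) < b.
Proof. by move=> hx hy; apply: absD_lt => //; rewrite absN. Qed.
Lemma abs_tri_lt x y z b : abs (x - y) < b -> abs (y - z) < b -> abs (x - z) < b.
Proof. move=> h1 h2; have -> : x - z = (x - y) + (y - z) by ring. exact: absD_lt. Qed.
Lemma abs_tri_le x y z b : abs (x - y) <= b -> abs (y - z) <= b -> abs (x - z) <= b.
Proof. move=> h1 h2; have -> : x - z = (x - y) + (y - z) by ring. exact: absD_le. Qed.
Lemma abs_eq_lt u v : abs (u - v) < abs v -> abs u = abs v.
Proof.
move=> h; apply/eqP; rewrite eq_le; apply/andP; split.
  have e : u = (u - v) + v by ring.
  rewrite {1}e; by apply: absD_le; [exact: ltW | exact: lexx].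
rewrite leNgt; apply/negP => hu.
have : abs v < abs v.
  have e : v = u - (u - v) by ring.
  rewrite {1}e; exact: absB_lt.
by rewrite ltxx.
Qed.
Lemma absX x n : abs (x ^+ n) = abs x ^+ n.
Proof. elim: n => [|n IH]; first by rewrite !expr0 abs1. by rewrite !exprS absM IH. Qed.
Lemma absV x : abs (x^-1) = (abs x)^-1.
Proof.
have [->|hx] := eqVneq x 0; first by rewrite invr0 abs0 invr0.
have : abs x * abs (x^-1) = 1 by rewrite -absM mulfV // abs1.
move=> h; have hx0 : abs x != 0 by rewrite gt_eqF // abs_neq0.
by rewrite -[abs x^-1]mul1r -(mulVf hx0) -mulrA h mulr1.
Qed.
Lemma absf_div x y : abs (x / y) = abs x / abs y.
Proof. by rewrite absM absV. Qed.
Lemma abs_natr n : abs (n%:R) <= 1.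
Proof.
elim: n => [|n IH]; first by rewrite abs0 ler01.
by rewrite mulrS; apply: absD_le => //; rewrite abs1.
Qed.
Lemma abs_mulrn x n : abs (x *+ n) <= abs x.
Proof.
rewrite -mulr_natr absM; have := abs_natr n => h.
by rewrite -{2}[abs x]mulr1 ler_wpM2l // abs_ge0.
Qed.
Lemma abs_sum_le (I : Type) (s : seq I) (F : I -> K) (b : R) :
  0 <= b -> (forall i, abs (F i) <= b) -> abs (\sum_(i <- s) F i) <= b.
Proof.
move=> hb hF; elim: s => [|i s IH]; first by rewrite big_nil abs0.
by rewrite big_cons; apply: absD_le.
Qed.
Lemma abs_prod (I : Type) (s : seq I) (F : I -> K) :
  abs (\prod_(i <- s) F i) = \prod_(i <- s) abs (F i).
Proof.
elim: s => [|i s IH]; first by rewrite !big_nil abs1.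
by rewrite !big_cons absM IH.
Qed.
End Ultra.


Section Core.
Variables (R : realType) (K : closedFieldType) (abs : K -> R).
Hypothesis habs : is_nonarch_abs abs.
Hypothesis hcompl : abs_complete abs.

Let ge0 := abs_ge0 habs.
Let abs0 := abs0 habs.
Let absN := absN habs.
Let absM := absM habs.
Let absB := absB habs.
Let absf_div := absf_div habs.

Lemma half_pow_small (s e : R) : 0 < e -> 0 <= s ->
  exists N : nat, (2^-1) ^+ N * s < e.
Proof.
move=> he hs.
have hx : 0 <= s / e by apply: divr_ge0 => //; exact: ltW.
set N := Num.Def.archi_bound (s / e).
exists N.
have h1 := archi_boundP hx.
have h2 : (N%:R : R) < (2 ^ N)%:R by rewrite ltr_nat; exact: ltn_expl.
have h3 : s / e < 2 ^+ N by rewrite -natrX; exact: lt_trans h1 h2.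
have h2p : 0 < (2 : R) ^+ N by apply: exprn_gt0.
rewrite exprVn mulrC -/(s / 2 ^+ N) ltr_pdivrMr // mulrC -ltr_pdivrMr //.
Qed.

Variables (f : K -> K) (a L : K) (eps : R).
Hypothesis heps : 0 < eps.
Hypothesis hL : L != 0.
Hypothesis hest : forall x x', abs (x - a) < eps -> abs (x' - a) < eps ->
  abs (f x - f x' - L * (x - x')) <= 2^-1 * abs L * abs (x - x').

Let hLp : 0 < abs L := abs_neq0 habs hL.

Lemma core_scale x x' : abs (x - a) < eps -> abs (x' - a) < eps ->
  abs (f x - f x') = abs L * abs (x - x').
Proof.
move=> hx hx'; have [<-|hne] := eqVneq x x'.
  by rewrite !subrr !abs0 mulr0.
rewrite -absM; apply: (abs_eq_lt habs).
apply: le_lt_trans (hest hx hx') _.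
rewrite absM -mulrA; rewrite gtr_pMl ?invf_lt1 ?ltr1n //.
by apply: mulr_gt0 => //; apply: abs_neq0 => //; rewrite subr_eq0.
Qed.

Let g x := x - (f x - (f a + 0)) / L.

Lemma core_bij r : 0 < r -> r <= eps ->
  set_bij (disk abs a r) (disk abs (f a) (abs L * r)) f.
Proof.
move=> hr hre; split.
- move=> x; rewrite /disk /= => hx.
  rewrite core_scale; first by rewrite ltr_pM2l.
    exact: lt_le_trans hx hre.
  by rewrite subrr abs0.
- move=> x x'; rewrite /disk !inE /= => hx hx' hf.
  have := core_scale (lt_le_trans hx hre) (lt_le_trans hx' hre).
  rewrite hf subrr abs0 => /esym /eqP; rewrite mulf_eq0 gt_eqF //= => /eqP.
  by move/(abs_eq0 habs)/eqP; rewrite subr_eq0 => /eqP.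
move=> y; rewrite /disk /= => hy.
set s := abs (y - f a) / abs L.
have hs0 : 0 <= s by apply: divr_ge0 => //; exact: ltW.
have hsr : s < r by rewrite /s ltr_pdivrMr // mulrC.
have hse : s < eps by exact: lt_le_trans hsr hre.
pose G x := x - (f x - y) / L.
have Gc : forall x x', abs (x - a) < eps -> abs (x' - a) < eps ->
    abs (G x - G x') <= 2^-1 * abs (x - x').
  move=> x x' hx hx'.
  have -> : G x - G x' = - ((f x - f x' - L * (x - x')) / L).
    rewrite /G; field; exact: hL.
  rewrite absN absf_div // ler_pdivrMr // mulrAC; exact: hest.
have Ga : abs (G a - a) = s.
  rewrite /G /s; have -> : a - (f a - y) / L - a = (y - f a) / L.
    by field.
  by rewrite absf_div.
have Gin : forall x, abs (x - a) <= s -> abs (G x - a) <= s.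
  move=> x hx; apply: (abs_tri_le habs (y := G a)); last by rewrite Ga.
  apply: le_trans (Gc _ _ (le_lt_trans hx hse) _) _; first by rewrite subrr abs0.
  apply: le_trans hx; rewrite ler_piMl ?invf_le1 ?ler1n //.
pose u n := iter n G a.
have uin : forall n, abs (u n - a) <= s.
  elim=> [|n IH]; first by rewrite /u /= subrr abs0.
  by rewrite /u iterS; apply: Gin.
have ustep : forall n, abs (u n.+1 - u n) <= (2^-1) ^+ n * s.
  elim=> [|n IH]; first by rewrite /u /= Ga expr0 mul1r.
  rewrite /u !iterS -/(u n) -iterS -/(u n.+1).
  apply: le_trans (Gc _ _ (le_lt_trans (uin _) hse) (le_lt_trans (uin _) hse)) _.
  rewrite exprS -mulrA ler_pM2l //; rewrite invr_gt0 ltr0n //.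
have hpw : forall n, 0 <= (2^-1 : R) ^+ n * s.
  by move=> n; apply: mulr_ge0 => //; apply: exprn_ge0; rewrite invr_ge0 ler0n.
have ubase : forall N m, (N <= m)%N -> abs (u m - u N) <= (2^-1) ^+ N * s.
  move=> N; elim=> [|m IH].
    by rewrite leqn0 => /eqP ->; rewrite subrr abs0.
  rewrite leq_eqVlt => /orP [/eqP <-|]; first by rewrite subrr abs0.
  rewrite ltnS => hNm; apply: (abs_tri_le habs (y := u m)); last exact: IH.
  apply: le_trans (ustep m) _; rewrite ler_wpM2r //.
  rewrite -(subnK hNm) exprD ler_piMl ?exprn_ge0 ?exprn_ile1 ?invr_ge0 ?ler0n //.
  by rewrite invf_le1 ?ler1n.
have [l hl] : exists l, forall e : R, 0 < e -> exists N, forall n, (N <= n)%N ->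
    abs (u n - l) < e.
  apply: hcompl => e he.
  have [N hN] := half_pow_small he hs0.
  exists N => m n hm hn.
  apply: le_lt_trans hN; apply: (abs_tri_le habs (y := u N)).
  - exact: ubase.
  - by rewrite absB; exact: ubase.
have hla : abs (l - a) < r.
  have [N hN] := hl r hr.
  apply: (abs_tri_lt habs (y := u N)); first by rewrite absB; exact: hN.
  exact: le_lt_trans (uin N) hsr.
exists l; first by [].
have hlae : abs (l - a) < eps by exact: lt_le_trans hla hre.
have hGl : G l = l.
  apply/eqP; rewrite -subr_eq0; apply/eqP/(abs_eq0 habs).
  apply/eqP; rewrite eq_le ge0 andbT; rewrite leNgt; apply/negP => hpos.
  have [N hN] := hl _ hpos.
  have h1 : abs (G l - u N.+1) < abs (G l - l).
    rewrite /u iterS -/(u N).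
    apply: le_lt_trans (Gc _ _ hlae (le_lt_trans (uin N) hse)) _.
    apply: le_lt_trans (hN N (leqnn N)); rewrite absB ler_piMl ?invf_le1 ?ler1n //.
  have h2 : abs (u N.+1 - l) < abs (G l - l) by apply: hN.
  have := abs_tri_lt habs h1 h2; by rewrite ltxx.
move: hGl; rewrite /G => /eqP; rewrite subr_eq addrC -subr_eq subrr eq_sym.
rewrite mulf_eq0 invr_eq0 (negbTE hL) orbF subr_eq0 => /eqP //.
Qed.
End Core.


Section PolyBounds.
Variables (R : realType) (K : closedFieldType) (abs : K -> R).
Hypothesis habs : is_nonarch_abs abs.

Let ge0 := abs_ge0 habs.
Let abs0 := abs0 habs.
Let absN := absN habs.
Let absM := absM habs.
Let absB := absB habs.
Let absX := absX habs.
Let abs_sum_le := abs_sum_le habs.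
Let absD_le := absD_le habs.

Definition cbd (p : {poly K}) : R := \sum_(i < size p) abs p`_i.

Lemma cbd_ge0 (p : {poly K}) : 0 <= cbd p.
Proof. by apply: sumr_ge0 => i _. Qed.

Lemma coef_le_cbd (p : {poly K}) j : abs p`_j <= cbd p.
Proof.
have [hj|hj] := ltnP j (size p).
  rewrite /cbd (bigD1 (Ordinal hj)) //= lerDl.
  by apply: sumr_ge0 => i _.
by rewrite nth_default // abs0 cbd_ge0.
Qed.

Lemma horner_le (q : {poly K}) (B A : R) n x : 1 <= A -> 0 <= B -> abs x <= A ->
  (size q <= n)%N -> (forall j, abs q`_j <= B) -> abs q.[x] <= B * A ^+ n.
Proof.
move=> hA hB hx hs hc; rewrite (horner_coef_wide x hs).
apply: abs_sum_le => //; first by apply: mulr_ge0 => //; apply: exprn_ge0; lra.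
move=> i; rewrite absM absX; apply: ler_pM => //.
  by apply: exprn_ge0.
apply: le_trans (lerXn2r _ _ _ hx) _; rewrite ?nnegrE //; first by apply: le_trans hA; lra.
by apply: ler_weXn2l => //; apply: ltnW.
Qed.

Lemma size_nderivn_le (p : {poly K}) i : (size (p^`N(i)) <= size p)%N.
Proof.
apply/leq_sizeP => j hj; rewrite coef_nderivn nth_default ?mul0rn //.
by apply: leq_trans hj _; rewrite leq_addl.
Qed.

Lemma nderivn_coef_le (p : {poly K}) i j : abs (p^`N(i))`_j <= cbd p.
Proof. rewrite coef_nderivn; apply: le_trans (abs_mulrn habs _ _) _; exact: coef_le_cbd. Qed.

Definition pbound (p : {poly K}) (A : R) := cbd p * A ^+ size p.

Lemma pbound_ge0 (p : {poly K}) A : 1 <= A -> 0 <= pbound p A.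
Proof. move=> hA; apply: mulr_ge0; [exact: cbd_ge0|apply: exprn_ge0; lra]. Qed.

Lemma horner_pbound (p : {poly K}) A x : 1 <= A -> abs x <= A -> abs p.[x] <= pbound p A.
Proof. by move=> hA hx; apply: horner_le => //; [exact: cbd_ge0|exact: coef_le_cbd]. Qed.

Lemma nderivn_pbound (p : {poly K}) i A x : 1 <= A -> abs x <= A -> abs (p^`N(i)).[x] <= pbound p A.
Proof.
move=> hA hx; apply: horner_le => //; [exact: cbd_ge0|exact: size_nderivn_le|].
exact: nderivn_coef_le.
Qed.

Lemma taylor_split (p : {poly K}) x h :
  p.[x + h] - p.[x] - p^`().[x] * h =
  \sum_(i < size p) p^`N(i.+2).[x] * h ^+ i.+2.
Proof.
rewrite (@nderiv_taylor_wide _ (size p).+2 p x h (mulrC x h)); last by apply: leq_trans (leqnSn _) (leqnSn _).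
rewrite big_ord_recl big_ord_recl /= nderivn0 nderivn1 expr0 mulr1 expr1.
under eq_bigr => i _ do rewrite /bump /= !add1n.
ring.
Qed.

Lemma taylor2 (p : {poly K}) x h A : 1 <= A -> abs x <= A -> abs h <= 1 ->
  abs (p.[x + h] - p.[x] - p^`().[x] * h) <= pbound p A * abs h ^+ 2.
Proof.
move=> hA hx hh; rewrite taylor_split.
apply: abs_sum_le; first by apply: mulr_ge0; [exact: pbound_ge0|apply: exprn_ge0].
move=> i; rewrite absM absX; apply: ler_pM => //; first exact: exprn_ge0.
  exact: nderivn_pbound.
rewrite -(addn2 i) exprD ler_piMl ?exprn_ge0 ?exprn_ile1 //.
Qed.

Lemma deriv_pbound (p : {poly K}) A x : 1 <= A -> abs x <= A -> abs (p^`()).[x] <= pbound p A.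
Proof. by rewrite -nderivn1; exact: nderivn_pbound. Qed.

Lemma lip_bound (p : {poly K}) x y A : 1 <= A -> abs y <= A -> abs (x - y) <= 1 ->
  abs (p.[x] - p.[y]) <= pbound p A * abs (x - y).
Proof.
move=> hA hy hxy.
have -> : p.[x] - p.[y] = (p.[y + (x - y)] - p.[y] - p^`().[y] * (x - y)) + p^`().[y] * (x - y).
  have -> : y + (x - y) = x by ring.
  ring.
have hb := pbound_ge0 p hA.
apply: absD_le => //.
  apply: le_trans (taylor2 p hA hy hxy) _.
  by rewrite ler_wpM2l // expr2 ler_piMr.
by rewrite absM ler_wpM2r //; exact: deriv_pbound.
Qed.

End PolyBounds.


Section Local.
Variables (R : realType) (K : closedFieldType) (abs : K -> R).
Hypothesis habs : is_nonarch_abs abs.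

Let ge0 := abs_ge0 habs.
Let abs0 := abs0 habs.
Let absN := absN habs.
Let absM := absM habs.
Let absB := absB habs.
Let absX := absX habs.
Let absD_le := absD_le habs.
Let absB_le := absB_le habs.

Lemma abs_mul_le (u v : K) (bu bv : R) : abs u <= bu -> abs v <= bv ->
  abs (u * v) <= bu * bv.
Proof. by move=> hu hv; rewrite absM; apply: ler_pM. Qed.

Lemma wronsk_horner (P Q : {poly K}) x :
  (wronsk P Q).[x] = P^`().[x] * Q.[x] - P.[x] * Q^`().[x].
Proof. by rewrite /wronsk !hornerE. Qed.

Lemma abs_le_A (x a : K) (A e : R) : 1 <= A -> e <= 1 -> abs a <= A -> abs (x - a) < e -> abs x <= A.
Proof.
move=> hA he ha hx; have -> : x = (x - a) + a by ring.
by apply: absD_le => //; apply: le_trans (ltW hx) _; lra.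
Qed.

Lemma local_est (P Q : {poly K}) (A q0 w0 : R) : 1 <= A -> 0 < q0 -> 0 < w0 ->
  exists eps0 : R, [/\ 0 < eps0, eps0 <= 1 &
  forall a, abs a <= A -> q0 <= abs Q.[a] -> w0 <= abs (wronsk P Q).[a] ->
   (forall x, abs (x - a) < eps0 -> abs Q.[x] = abs Q.[a]) /\
   (forall x x', abs (x - a) < eps0 -> abs (x' - a) < eps0 ->
      abs (rat_eval P Q x - rat_eval P Q x' - rat_deriv P Q a * (x - x'))
        <= 2^-1 * abs (rat_deriv P Q a) * abs (x - x'))].
Proof.
move=> hA hq0 hw0.
set W := wronsk P Q.
set B := 1 + pbound abs P A + pbound abs Q A + pbound abs W A.
have hPb := pbound_ge0 habs P hA.
have hQb := pbound_ge0 habs Q hA.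
have hWb := pbound_ge0 habs W hA.
have hB1 : 1 <= B by rewrite /B; lra.
have hB0 : 0 < B by lra.
have hPB : pbound abs P A <= B by rewrite /B; lra.
have hQB : pbound abs Q A <= B by rewrite /B; lra.
have hWB : pbound abs W A <= B by rewrite /B; lra.
have hB4 : 0 < B ^+ 4 by apply: exprn_gt0.
set e1 := q0 / (2 * B).
set e2 := w0 * q0 ^+ 2 / (2 * B ^+ 4).
have he1 : 0 < e1 by apply: divr_gt0 => //; lra.
have he2 : 0 < e2 by apply: divr_gt0; [apply: mulr_gt0 => //; apply: exprn_gt0|lra].
exists (Num.min 1 (Num.min e1 e2)).
set eps0 := Num.min 1 (Num.min e1 e2).
have heps1 : eps0 <= 1 by rewrite /eps0 ge_min lexx.
have hepse1 : eps0 <= e1 by rewrite /eps0 !ge_min lexx orbT.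
have hepse2 : eps0 <= e2 by rewrite /eps0 !ge_min lexx !orbT.
have hepsp : 0 < eps0 by rewrite /eps0 !lt_min ltr01 he1 he2.
split => // a ha hqa hwa.
have hQa0 : 0 < abs Q.[a] by apply: lt_le_trans hq0 hqa.
have hxA : forall x, abs (x - a) < eps0 -> abs x <= A.
  by move=> x; apply: abs_le_A.
have hQx : forall x, abs (x - a) < eps0 -> abs Q.[x] = abs Q.[a].
  move=> x hx; apply: (abs_eq_lt habs).
  have hl := lip_bound habs Q hA ha (ltW (lt_le_trans hx heps1)).
  apply: le_lt_trans hl _.
  have h1 : pbound abs Q A * abs (x - a) <= B * eps0.
    by apply: ler_pM => //; exact: ltW.
  have h2 : B * eps0 < q0.
    apply: le_lt_trans (ler_wpM2l (ltW hB0) hepse1) _.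
    have -> : B * e1 = q0 / 2 by rewrite /e1; field; lra.
    lra.
  by apply: le_lt_trans h1 _; apply: lt_le_trans h2 hqa.
split => // x x' hx hx'.
have hxA' := hxA _ hx; have hx'A := hxA _ hx'.
set h := x - x'.
have hh : abs h < eps0 by rewrite /h; apply: (abs_tri_lt habs (y := a)) => //; rewrite absB.
have hh1 : abs h <= 1 by apply: ltW; apply: lt_le_trans hh heps1.
have hQxa := hQx _ hx; have hQx'a := hQx _ hx'.
have nz : forall y, abs y = abs Q.[a] -> y != 0.
  by move=> y hy; apply/eqP => hy0; move: hy; rewrite hy0 abs0 => h0; move: hQa0; rewrite -h0 ltxx.
have hQx0 := nz _ hQxa; have hQx'0 := nz _ hQx'a; have hQa0' : Q.[a] != 0 by exact: nz.
set Px := P.[x]; set Px' := P.[x']; set Qx := Q.[x]; set Qx' := Q.[x']; set Qa := Q.[a].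
set dP := P^`().[x']; set dQ := Q^`().[x'].
set TP := Px - Px' - dP * h; set TQ := Qx - Qx' - dQ * h.
set Wa := W.[a]; set Wx' := W.[x'].
have hWx' : Wx' = dP * Qx' - Px' * dQ by rewrite /Wx' wronsk_horner.
have key : rat_eval P Q x - rat_eval P Q x' - rat_deriv P Q a * h =
   ((TP * Qx' - Px' * TQ) * Qa ^+ 2 + h * (Wx' - Wa) * Qa ^+ 2
     + h * Wa * (Qa ^+ 2 - Qx * Qx')) / (Qx * Qx' * Qa ^+ 2).
  rewrite /rat_eval /rat_deriv -/W -/Wa -/Px -/Px' -/Qx -/Qx' -/Qa /TP /TQ hWx' /Wa /W wronsk_horner.
  by field; rewrite hQa0' hQx'0 hQx0.
rewrite key.
have xx : x' + h = x by rewrite /h; ring.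
have hTP : abs TP <= B * abs h ^+ 2.
  rewrite /TP /Px -xx; apply: le_trans (taylor2 habs P hA hx'A hh1) _.
  by rewrite ler_wpM2r ?exprn_ge0.
have hTQ : abs TQ <= B * abs h ^+ 2.
  rewrite /TQ /Qx -xx; apply: le_trans (taylor2 habs Q hA hx'A hh1) _.
  by rewrite ler_wpM2r ?exprn_ge0.
have bP : forall z, abs z <= A -> abs P.[z] <= B.
  by move=> z hz; apply: le_trans (horner_pbound habs P hA hz) hPB.
have bQ : forall z, abs z <= A -> abs Q.[z] <= B.
  by move=> z hz; apply: le_trans (horner_pbound habs Q hA hz) hQB.
have bW : forall z, abs z <= A -> abs W.[z] <= B.
  by move=> z hz; apply: le_trans (horner_pbound habs W hA hz) hWB.
have hQa2 : abs (Qa ^+ 2) <= B ^+ 2 by rewrite absX; apply: lerXn2r; rewrite ?nnegrE //; [lra|exact: bQ].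
set bnd := abs h * (eps0 * B ^+ 4).
have hbnd0 : 0 <= bnd by apply: mulr_ge0 => //; apply: mulr_ge0; [lra|exact: ltW].
have hT1 : abs ((TP * Qx' - Px' * TQ) * Qa ^+ 2) <= bnd.
  apply: le_trans (abs_mul_le (_ : abs (TP * Qx' - Px' * TQ) <= B ^+ 2 * abs h ^+ 2) hQa2) _.
    apply: absB_le.
      apply: le_trans (abs_mul_le hTP (bQ _ hx'A)) _; rewrite !expr2; nra.
    apply: le_trans (abs_mul_le (bP _ hx'A) hTQ) _; rewrite !expr2; nra.
  rewrite /bnd.
  have : abs h ^+ 2 <= abs h * eps0 by rewrite expr2 ler_wpM2l // ltW.
  have : 0 <= abs h := ge0 h.
  move=> h0 h1.
  have hB2 : 0 <= B ^+ 2 by apply: exprn_ge0; lra.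
  have -> : B ^+ 4 = B ^+ 2 * B ^+ 2 by ring.
  nra.
have hT2 : abs (h * (Wx' - Wa) * Qa ^+ 2) <= bnd.
  have hl : abs (Wx' - Wa) <= B * eps0.
    apply: le_trans (lip_bound habs W hA ha (ltW (lt_le_trans hx' heps1))) _.
    apply: ler_pM => //; exact: ltW.
  apply: le_trans (abs_mul_le (abs_mul_le (lexx (abs h)) hl) hQa2) _.
  rewrite /bnd -mulrA ler_wpM2l //.
  have -> : B ^+ 4 = B * B ^+ 2 * B by ring.
  have hE : 0 <= eps0 * B ^+ 2 * B by rewrite !mulr_ge0 ?exprn_ge0 //; lra.
  have := ler_wpM2l hE hB1; rewrite mulr1 => hh'.
  nra.
have hT3 : abs (h * Wa * (Qa ^+ 2 - Qx * Qx')) <= bnd.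
  have hl : abs (Qa ^+ 2 - Qx * Qx') <= B * (B * eps0).
    have -> : Qa ^+ 2 - Qx * Qx' = Qa * (Qa - Qx') + Qx' * (Qa - Qx) by ring.
    have lq : forall z, abs (z - a) < eps0 -> abs (Qa - Q.[z]) <= B * eps0.
      move=> z hz; rewrite absB; apply: le_trans (lip_bound habs Q hA ha (ltW (lt_le_trans hz heps1))) _.
      apply: ler_pM => //; exact: ltW.
    apply: absD_le; apply: abs_mul_le; [exact: bQ|exact: lq|exact: bQ|exact: lq].
  apply: le_trans (abs_mul_le (abs_mul_le (lexx (abs h)) (bW _ ha)) hl) _.
  rewrite /bnd -mulrA ler_wpM2l //.
  have -> : B ^+ 4 = B * B * B * B by ring.
  have hE : 0 <= eps0 * B * B * B by rewrite !mulr_ge0 //; lra.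
  have := ler_wpM2l hE hB1; rewrite mulr1 => hh'.
  nra.
have hnum : abs ((TP * Qx' - Px' * TQ) * Qa ^+ 2 + h * (Wx' - Wa) * Qa ^+ 2
     + h * Wa * (Qa ^+ 2 - Qx * Qx')) <= bnd.
  by apply: absD_le => //; apply: absD_le.
set qa := abs Qa.
have hqa0 : 0 < qa by [].
have hLabs : abs (rat_deriv P Q a) = abs Wa / qa ^+ 2.
  by rewrite /rat_deriv (absf_div habs) absX.
have hden : abs (Qx * Qx' * Qa ^+ 2) = qa ^+ 4.
  rewrite !absM hQxa hQx'a -/qa; ring.
rewrite (absf_div habs) hden hLabs.
have hq4 : 0 < qa ^+ 4 by apply: exprn_gt0.
rewrite ler_pdivrMr //.
apply: le_trans hnum _.
rewrite /bnd.
have hwq : eps0 * B ^+ 4 <= 2^-1 * abs Wa * qa ^+ 2.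
  apply: le_trans (_ : e2 * B ^+ 4 <= _); first by rewrite ler_wpM2r // ltW.
  have -> : e2 * B ^+ 4 = 2^-1 * (w0 * q0 ^+ 2) by rewrite /e2; field; rewrite lt0r_neq0.
  rewrite -mulrA ler_wpM2l ?invr_ge0 ?ler0n //.
  have hq2 : q0 ^+ 2 <= qa ^+ 2 by apply: lerXn2r; rewrite ?nnegrE //; lra.
  apply: ler_pM => //; [lra|apply: exprn_ge0; lra].
have hqa2 : qa ^+ 2 != 0 by rewrite expf_neq0 // lt0r_neq0.
have -> : 2^-1 * (abs Wa / qa ^+ 2) * abs h * qa ^+ 4 = abs h * (2^-1 * abs Wa * qa ^+ 2).
  by field; rewrite lt0r_neq0.
by rewrite ler_wpM2l.
Qed.
End Local.


Section Berk.
Variables (R : realType) (K : closedFieldType) (abs : K -> R).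
Hypothesis habs : is_nonarch_abs abs.

Let ge0 := abs_ge0 habs.
Let abs0 := abs0 habs.
Let absN := absN habs.
Let absM := absM habs.
Let absB := absB habs.
Let abs1 := abs1 habs.

Section W.
Variable w : {poly K} -> R.
Hypothesis hw : is_berk abs w.
Lemma wC c : w c%:P = abs c. Proof. by case: hw. Qed.
Lemma wge0 p : 0 <= w p. Proof. by case: hw. Qed.
Lemma wM p q : w (p * q) = w p * w q. Proof. by case: hw. Qed.
Lemma wD p q : w (p + q) <= w p + w q. Proof. by case: hw. Qed.
Lemma wN p : w (- p) = w p.
Proof. by rewrite -mulN1r wM -polyCN wC absN abs1 mul1r. Qed.
Lemma wB p q : w (p - q) <= w p + w q.
Proof. by apply: le_trans (wD _ _) _; rewrite wN. Qed.
Lemma wXn p n : w (p ^+ n) = w p ^+ n.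
Proof. elim: n => [|n IH]; first by rewrite !expr0 -polyC1 wC abs1. by rewrite !exprS wM IH. Qed.
Lemma w_sum (I : Type) (s : seq I) (F : I -> {poly K}) :
  w (\sum_(i <- s) F i) <= \sum_(i <- s) w (F i).
Proof.
elim: s => [|i s IH]; first by rewrite !big_nil wC abs0.
rewrite !big_cons; apply: le_trans (wD _ _) _; exact: lerD.
Qed.
Lemma w_poly_le (h : {poly K}) (D : R) : w 'X <= D ->
  w h <= \sum_(i < size h) abs h`_i * D ^+ i.
Proof.
move=> hX; rewrite -{1}(coefK h) poly_def.
apply: le_trans; first exact: w_sum. apply: ler_sum => i _.
rewrite -mul_polyC wM wC wXn; apply: ler_wpM2l => //.
by apply: lerXn2r; rewrite ?nnegrE //; [exact: wge0|apply: le_trans hX; exact: wge0].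
Qed.
End W.

Lemma typeI_berk (c : K) : is_berk abs (typeI abs c).
Proof.
rewrite /typeI; split => [x|p|p q|p q]; rewrite ?hornerC ?hornerM ?absM //.
by rewrite hornerD; apply: le_trans (absD habs _ _) _; rewrite ge_max !lerDl !lerDr !ge0.
Qed.

Lemma cont_one (c : K) (g : {poly K}) :
  exists C : R, 0 <= C /\ forall w, is_berk abs w -> w ('X - c%:P) <= 1 ->
    w g <= abs g.[c] + C * w ('X - c%:P) /\ abs g.[c] <= w g + C * w ('X - c%:P).
Proof.
have : root (g - g.[c]%:P) c by rewrite /root !hornerE subrr.
case/factor_theorem => h hh.
set D := 1 + abs c.
exists (\sum_(i < size h) abs h`_i * D ^+ i); split.
  by apply: sumr_ge0 => i _; apply: mulr_ge0 => //; apply: exprn_ge0; rewrite /D; have := ge0 c; lra.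
move=> w hw hwX.
have hX : w 'X <= D.
  have -> : ('X : {poly K}) = ('X - c%:P) + c%:P by ring.
  apply: le_trans (wD hw _ _) _; rewrite (wC hw) /D; lra.
have hwh := w_poly_le hw h hX.
have hg : g = g.[c]%:P + h * ('X - c%:P) by rewrite -hh; ring.
have hw0 := wge0 hw ('X - c%:P).
split.
  rewrite {1}hg; apply: le_trans (wD hw _ _) _; rewrite (wC hw) (wM hw) lerD2l.
  by apply: ler_wpM2r.
have hgc : g.[c]%:P = g - h * ('X - c%:P) by rewrite {2}hg; ring.
rewrite -(wC hw) hgc; apply: le_trans (wB hw _ _) _; rewrite (wM hw) lerD2l.
by apply: ler_wpM2r.
Qed.

Lemma cont_typeI (c : K) (s : seq ({poly K} * R * R)) :
  (forall t, t \in s -> t.1.2 < typeI abs c t.1.1 < t.2) ->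
  exists d : R, 0 < d /\ forall w, is_berk abs w -> w ('X - c%:P) < d ->
    forall t, t \in s -> t.1.2 < w t.1.1 < t.2.
Proof.
elim: s => [|t s IH] hs.
  by exists 1; split => // w _ _ t; rewrite in_nil.
have hs' : forall t', t' \in s -> t'.1.2 < typeI abs c t'.1.1 < t'.2.
  by move=> t' ht'; apply: hs; rewrite in_cons ht' orbT.
have [d [hd hdw]] := IH hs'.
have /andP [hlo hhi] := hs t (mem_head _ _).
have [C [hC hCw]] := cont_one c t.1.1.
rewrite /typeI in hlo hhi.
set m := Num.min (abs (t.1.1).[c] - t.1.2) (t.2 - abs (t.1.1).[c]).
have hm : 0 < m by rewrite /m lt_min !subr_gt0 hlo hhi.
exists (Num.min 1 (Num.min d (m / (C + 1)))); split.
  by rewrite !lt_min ltr01 hd divr_gt0 //; lra.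
move=> w hw hwd t'; rewrite in_cons => /orP [/eqP ->|ht'].
  have h1 : w ('X - c%:P) <= 1 by apply: ltW; apply: lt_le_trans hwd _; rewrite ge_min lexx.
  have [hu hl] := hCw w hw h1.
  have hwm : w ('X - c%:P) < m / (C + 1) by apply: lt_le_trans hwd _; rewrite !ge_min lexx !orbT.
  have hCm : C * w ('X - c%:P) < m.
    have hw0 := wge0 hw ('X - c%:P).
    have : (C + 1) * w ('X - c%:P) < m by rewrite mulrC -ltr_pdivlMr //; lra.
    nra.
  have hm1 : m <= abs (t.1.1).[c] - t.1.2 by rewrite /m ge_min lexx.
  have hm2 : m <= t.2 - abs (t.1.1).[c] by rewrite /m ge_min lexx orbT.
  apply/andP; split; lra.
apply: hdw => //; apply: lt_le_trans hwd _; rewrite !ge_min lexx !orbT //.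
Qed.

Lemma fatou_open (P Q : {poly K}) (z0 : {poly K} -> R) :
  berk_fatou abs P Q (Some z0) ->
  exists s : seq ({poly K} * R * R),
    (forall t, t \in s -> t.1.2 < z0 t.1.1 < t.2) /\
    forall w, is_berk abs w -> (forall t, t \in s -> t.1.2 < w t.1.1 < t.2) ->
      berk_fatou abs P Q (Some w).
Proof.
case=> hz0 [V [hV [[s [hs hsV]] hinf]]].
exists s; split => // w hw hws.
pose V' := fun p : option ({poly K} -> R) => exists w', p = Some w' /\ is_berk abs w' /\
   (forall t, t \in s -> t.1.2 < w' t.1.1 < t.2).
split => //; exists V'; split.
  by move=> p [w' [-> [hw' _]]].
split.
  exists s; split => // w' hw' hw's; by exists w'.
move=> hfin; apply: hinf; apply: sub_finite_set hfin.
move=> q [hq hnq]; split => //; move=> [n [p' [hp' hq']]]; apply: hnq.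
exists n, p'; split => //; case: hp' => w' [-> [hw' hw's]]; exact: hsV.
Qed.

Lemma fatou_inf (P Q : {poly K}) :
  berk_fatou abs P Q None ->
  exists M : R, forall w, is_berk abs w -> M < w 'X -> berk_fatou abs P Q (Some w).
Proof.
case=> _ [V [hV [[M [hVN hMV]] hinf]]].
exists M => w hw hwM.
pose V' := fun p : option ({poly K} -> R) => exists w', p = Some w' /\ is_berk abs w' /\ M < w' 'X.
split => //; exists V'; split.
  by move=> p [w' [-> [hw' _]]].
split.
  exists [:: ('X, M, w 'X + 1)]; split.
    by move=> t; rewrite inE => /eqP -> /=; rewrite hwM /=; lra.
  move=> w' hw' hw's; exists w'; split => //; split => //.
  by have /andP [] := hw's _ (mem_head _ _).
move=> hfin; apply: hinf; apply: sub_finite_set hfin.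
move=> q [hq hnq]; split => //; move=> [n [p' [hp' hq']]]; apply: hnq.
exists n, p'; split => //; case: hp' => w' [-> [hw' hw's]]; exact: hMV.
Qed.

Lemma fatou_typeI_ball (P Q : {poly K}) (c : K) :
  berk_fatou abs P Q (Some (typeI abs c)) ->
  exists d : R, 0 < d /\ forall w, is_berk abs w -> w ('X - c%:P) < d ->
    berk_fatou abs P Q (Some w).
Proof.
move=> /fatou_open [s [hs hsw]].
have [d [hd hdw]] := cont_typeI hs.
by exists d; split => // w hw hwd; apply: hsw => //; apply: hdw.
Qed.

End Berk.


Section Alg.
Variable K : closedFieldType.

Lemma deriv0_const (hchar : [pchar K] =i pred0) (p : {poly K}) :
  p^`() = 0 -> (size p <= 1)%N.
Proof.
move=> hd; apply/leq_sizeP => j hj.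
case: j hj => [//|j] _.
have := congr1 (fun q : {poly K} => q`_j) hd; rewrite coef_deriv coef0 /=.
move/eqP; rewrite -mulr_natr mulf_eq0 => /orP [/eqP //|].
by move: (pcharf0P K) => [h _]; rewrite (h hchar).
Qed.

Lemma wronsk_neq0 (hchar : [pchar K] =i pred0) (P Q : {poly K}) :
  Q != 0 -> coprimep P Q -> (1 <= ratdeg P Q)%N -> wronsk P Q != 0.
Proof.
move=> hQ hcop hnc; apply/negP => /eqP hW.
have hPQ : P^`() * Q = P * Q^`() by apply/eqP; rewrite -subr_eq0; apply/eqP.
have hQd : Q^`() = 0.
  apply/eqP; apply/negPn; apply/negP => hQd.
  have hdiv : (Q %| Q^`())%R.
    have : (Q %| P * Q^`())%R by rewrite -hPQ dvdp_mull // dvdpp.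
    by rewrite Gauss_dvdpr // coprimep_sym.
  have := dvdp_leq hQd hdiv; rewrite leqNgt lt_size_deriv //.
have hPd : P^`() = 0.
  by move: hPQ; rewrite hQd mulr0 => /eqP; rewrite mulf_eq0 (negbTE hQ) orbF => /eqP.
have h1 := deriv0_const hchar hQd; have h2 := deriv0_const hchar hPd.
by move: hnc; rewrite /ratdeg; case: (size P) h2 => [|[|]] //; case: (size Q) h1 => [|[|]].
Qed.

Lemma revd_horner (d : nat) (p : {poly K}) (x : K) :
  x != 0 -> (size p <= d.+1)%N -> (revd d p).[x^-1] * x ^+ d = p.[x].
Proof.
move=> hx hs; rewrite /revd horner_poly (horner_coef_wide _ hs) mulr_suml.
rewrite [RHS](reindex_inj rev_ord_inj) /=.
apply: eq_bigr => i _; rewrite subSS.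
have hi : (i <= d)%N by rewrite -ltnS.
rewrite exprVn -mulrA; congr (_ * _).
rewrite exprB // ?unitfE // mulrC.
by [].
Qed.

Lemma revd_horner0 (d : nat) (p : {poly K}) : (revd d p).[0] = p`_d.
Proof. by rewrite horner_coef0 /revd coef_poly /= subn0. Qed.

Lemma rat_eval_revd (d : nat) (P Q : {poly K}) (x : K) :
  x != 0 -> (size P <= d.+1)%N -> (size Q <= d.+1)%N ->
  rat_eval P Q x = rat_eval (revd d P) (revd d Q) x^-1.
Proof.
move=> hx hP hQ; rewrite /rat_eval -(revd_horner hx hP) -(revd_horner hx hQ).
have hxd : x ^+ d != 0 by rewrite expf_neq0.
have [->|hq] := eqVneq (revd d Q).[x^-1] 0; first by rewrite mul0r !invr0 !mulr0.
by field; rewrite hq hxd.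
Qed.

End Alg.

Section RealAlg.
Variables (R : realType) (K : closedFieldType) (abs : K -> R).
Hypothesis habs : is_nonarch_abs abs.
Let ge0 := abs_ge0 habs.
Let abs0 := abs0 habs.
Let absM := absM habs.
Let absX := absX habs.

Lemma root_prod_bound (p : {poly K}) (rs : seq K) (a : K) (d : R) :
  p = lead_coef p *: \prod_(z <- rs) ('X - z%:P) ->
  0 <= d -> (forall c, c \in rs -> d <= abs (a - c)) ->
  abs (lead_coef p) * d ^+ size rs <= abs p.[a].
Proof.
move=> hp hd hc; rewrite {2}hp hornerZ horner_prod absM ler_wpM2l //.
rewrite (abs_prod habs).
elim: rs hc {hp} => [|c rs IH] hc; first by rewrite big_nil expr0.
rewrite big_cons exprS; apply: ler_pM => //; first exact: exprn_ge0.
  by rewrite hornerXsubC; apply: hc; rewrite mem_head.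
by apply: IH => c' hc'; apply: hc; rewrite in_cons hc' orbT.
Qed.

Lemma pow_small (q e : R) : 0 <= q < 1 -> 0 < e -> exists N : nat, q ^+ N < e.
Proof.
move=> /andP [hq0 hq1] he.
have [->|hqp] := eqVneq q 0; first by exists 1%N; rewrite expr1.
have hqp' : 0 < q by rewrite lt_def hqp hq0.
set u := q^-1 - 1.
have hu : 0 < u by rewrite /u subr_gt0 invf_gt1.
have bern0 : forall n : nat, 1 + n%:R * u <= (1 + u) ^+ n.
  elim=> [|n IH]; first by rewrite mul0r addr0 expr0.
  rewrite exprS mulrSr mulrDl mul1r.
  have hn : 0 <= n%:R * u by apply: mulr_ge0 => //; exact: ltW.
  have hu2 : 0 <= n%:R * u * u by apply: mulr_ge0 => //; exact: ltW.
  have hp : (1 + u) * (1 + n%:R * u) <= (1 + u) * (1 + u) ^+ n by rewrite ler_wpM2l //; lra.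
  nra.
have bern : forall n : nat, 1 + n%:R * u <= (q^-1) ^+ n.
  by move=> n; have -> : q^-1 = 1 + u by rewrite /u; ring.
have hx : 0 <= (e * u)^-1 by rewrite invr_ge0 mulr_ge0 // ltW.
exists (Num.Def.archi_bound ((e * u)^-1)).
set N := Num.Def.archi_bound _.
have h1 := archi_boundP hx.
have h2 := bern N.
have hqN : 0 < q ^+ N by apply: exprn_gt0.
have hNu : e^-1 < N%:R * u.
  have : (e * u)^-1 * u < N%:R * u by rewrite ltr_pM2r.
  by rewrite invfM -mulrA mulVf ?mulr1 // gt_eqF.
have hbig : e^-1 < (q^-1) ^+ N by lra.
have hpos : 0 < (q^-1) ^+ N by apply: exprn_gt0; rewrite invr_gt0.
have : ((q^-1) ^+ N)^-1 < (e^-1)^-1.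
  by rewrite ltf_pV2 ?posrE ?invr_gt0.
by rewrite invrK exprVn invrK.
Qed.

Lemma small_elt (e : R) : 0 < e -> exists h : K, 0 < abs h < e.
Proof.
move=> he; case: habs => _ _ _ _ [x [hx0 hx1]].
have hxp : 0 < abs x by rewrite lt_def hx0 ge0.
have [t [ht0 ht1]] : exists t : K, 0 < abs t /\ abs t < 1.
  have [hlt|hgt] := ltP (abs x) 1; first by exists x.
  exists x^-1; rewrite (absV habs); split; first by rewrite invr_gt0.
  by rewrite invf_lt1 // lt_def hx1 hgt.
have [N hN] : exists N : nat, abs t ^+ N < e.
  by apply: pow_small => //; rewrite ht1 ltW.
exists (t ^+ N); rewrite absX hN andbT; exact: exprn_gt0.
Qed.

End RealAlg.


Section Far.
Variables (R : realType) (K : closedFieldType) (abs : K -> R).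
Hypothesis habs : is_nonarch_abs abs.
Hypothesis hcompl : abs_complete abs.

Let ge0 := abs_ge0 habs.
Let abs0 := abs0 habs.
Let absN := absN habs.
Let absM := absM habs.
Let absB := absB habs.
Let absX := absX habs.
Let absV := absV habs.
Let absD_le := absD_le habs.
Let absB_le := absB_le habs.
Let absf_div := absf_div habs.

Lemma rat_deriv_neq0 (P Q : {poly K}) a : Q.[a] != 0 -> (wronsk P Q).[a] != 0 ->
  rat_deriv P Q a != 0.
Proof.
by move=> hQ hW; rewrite /rat_deriv mulf_neq0 // ?invr_eq0 ?expf_neq0 // -/(wronsk P Q).
Qed.

Lemma near_concl (P Q : {poly K}) (a : K) (eps0 : R) :
  0 < eps0 -> Q.[a] != 0 -> (wronsk P Q).[a] != 0 ->
  (forall x, abs (x - a) < eps0 -> abs Q.[x] = abs Q.[a]) ->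
  (forall x x', abs (x - a) < eps0 -> abs (x' - a) < eps0 ->
      abs (rat_eval P Q x - rat_eval P Q x' - rat_deriv P Q a * (x - x'))
        <= 2^-1 * abs (rat_deriv P Q a) * abs (x - x')) ->
  forall r, 0 < r -> r <= eps0 ->
    (forall x, disk abs a r x -> Q.[x] != 0) /\
    set_bij (disk abs a r) (disk abs (rat_eval P Q a) (abs (rat_deriv P Q a) * r))
            (rat_eval P Q).
Proof.
move=> he hQa hWa hQx hest r hr hre; split.
  move=> x hx; apply/eqP => h0.
  have := hQx x (lt_le_trans hx hre); rewrite h0 abs0 => /esym /(abs_eq0 habs) h.
  by rewrite h eqxx in hQa.
apply: (core_bij habs hcompl he) => //.
exact: rat_deriv_neq0.
Qed.

Lemma taylor_rat (P Q : {poly K}) (a : K) : Q.[a] != 0 ->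
  exists rho C : R, [/\ 0 < rho, 0 <= C & forall h, abs h < rho ->
   abs (rat_eval P Q (a + h) - rat_eval P Q a - rat_deriv P Q a * h) <= C * abs h ^+ 2].
Proof.
move=> hQa.
set A := 1 + abs a.
have hA : 1 <= A by rewrite /A; have := ge0 a; lra.
have haA : abs a <= A by rewrite /A; lra.
set B := 1 + pbound abs P A + pbound abs Q A.
have hPb := pbound_ge0 habs P hA.
have hQb := pbound_ge0 habs Q hA.
have hB1 : 1 <= B by rewrite /B; lra.
have hPB : pbound abs P A <= B by rewrite /B; lra.
have hQB : pbound abs Q A <= B by rewrite /B; lra.
set qa := abs Q.[a].
have hqa : 0 < qa by apply: abs_neq0.
exists (Num.min 1 (qa / (2 * B))), (B ^+ 3 / qa ^+ 3); split.
- by rewrite lt_min ltr01 divr_gt0 //; lra.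
- by apply: divr_ge0; apply: exprn_ge0; lra.
move=> h hh.
have hh1 : abs h <= 1 by apply: ltW; apply: lt_le_trans hh _; rewrite ge_min lexx.
have hh2 : abs h < qa / (2 * B) by apply: lt_le_trans hh _; rewrite ge_min lexx orbT.
have hlipQ : abs (Q.[a + h] - Q.[a]) <= B * abs h.
  apply: le_trans (lip_bound habs Q hA haA _) _; first by rewrite addrC addKr.
  by rewrite addrC addKr ler_wpM2r.
have hQah : abs Q.[a + h] = qa.
  apply: (abs_eq_lt habs); apply: le_lt_trans hlipQ _.
  have : B * abs h < B * (qa / (2 * B)) by rewrite ltr_pM2l //; lra.
  have -> : B * (qa / (2 * B)) = qa / 2 by field; lra.
  rewrite -/qa; lra.
have hQah0 : Q.[a + h] != 0.
  by apply/eqP => h0; move: hQah; rewrite h0 abs0 => h1; move: hqa; rewrite -h1 ltxx.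
set Pa := P.[a]; set Qa := Q.[a]; set Pah := P.[a + h]; set Qah := Q.[a + h].
set TP := Pah - Pa - P^`().[a] * h; set TQ := Qah - Qa - Q^`().[a] * h.
set Wa := (wronsk P Q).[a].
have hWa : Wa = P^`().[a] * Qa - Pa * Q^`().[a] by rewrite /Wa wronsk_horner.
have key : rat_eval P Q (a + h) - rat_eval P Q a - rat_deriv P Q a * h =
  ((TP * Qa - Pa * TQ) * Qa - h * Wa * (Qah - Qa)) / (Qah * Qa ^+ 2).
  rewrite /rat_eval /rat_deriv -/Pa -/Qa -/Pah -/Qah /TP /TQ.
  rewrite -/(wronsk P Q) -/Wa hWa.
  by field; rewrite hQah0 hQa.
rewrite key absf_div absM absX hQah -/qa.
have hden : 0 < qa * qa ^+ 2 by rewrite mulr_gt0 ?exprn_gt0.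
rewrite ler_pdivrMr //.
have bP : abs Pa <= B by apply: le_trans (horner_pbound habs P hA haA) hPB.
have bQ : abs Qa <= B by apply: le_trans (horner_pbound habs Q hA haA) hQB.
have bdP : abs P^`().[a] <= B by apply: le_trans (deriv_pbound habs P hA haA) hPB.
have bdQ : abs Q^`().[a] <= B by apply: le_trans (deriv_pbound habs Q hA haA) hQB.
have hTP : abs TP <= B * abs h ^+ 2.
  apply: le_trans (taylor2 habs P hA haA hh1) _; by rewrite ler_wpM2r ?exprn_ge0.
have hTQ : abs TQ <= B * abs h ^+ 2.
  apply: le_trans (taylor2 habs Q hA haA hh1) _; by rewrite ler_wpM2r ?exprn_ge0.
have hW : abs Wa <= B * B.
  rewrite hWa; apply: absB_le; apply: abs_mul_le => //.
set bnd := B ^+ 3 * abs h ^+ 2.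
have hb0 : 0 <= B by lra.
have hh0 : 0 <= abs h := ge0 h.
have hB2 : 0 <= B * B by apply: mulr_ge0.
have hh20 : 0 <= abs h ^+ 2 by apply: exprn_ge0.
have hnum : abs ((TP * Qa - Pa * TQ) * Qa - h * Wa * (Qah - Qa)) <= bnd.
  apply: absB_le.
    apply: le_trans (abs_mul_le habs (_ : abs (TP * Qa - Pa * TQ) <= B * abs h ^+ 2 * B) bQ) _.
      apply: absB_le.
        exact (abs_mul_le habs hTP bQ).
      apply: le_trans (abs_mul_le habs bP hTQ) _; rewrite le_eqVlt; apply/orP; left; apply/eqP; ring.
    rewrite /bnd le_eqVlt; apply/orP; left; apply/eqP; ring.
  apply: le_trans (abs_mul_le habs (abs_mul_le habs (lexx (abs h)) hW) hlipQ) _.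
  rewrite /bnd le_eqVlt; apply/orP; left; apply/eqP; ring.
apply: le_trans hnum _; rewrite /bnd.
have -> : B ^+ 3 / qa ^+ 3 * abs h ^+ 2 * (qa * qa ^+ 2) = B ^+ 3 * abs h ^+ 2.
  by field; rewrite gt_eqF.
by [].
Qed.

Lemma abs_deriv_unique (f : K -> K) (a L L' : K) (eps rho C : R) :
  0 < eps -> 0 < rho -> 0 <= C -> L' != 0 ->
  (forall x, abs (x - a) < eps -> abs (f x - f a - L' * (x - a)) <= 2^-1 * abs L' * abs (x - a)) ->
  (forall h, abs h < rho -> abs (f (a + h) - f a - L * h) <= C * abs h ^+ 2) ->
  abs L = abs L'.
Proof.
move=> he hr hC hL' h1 h2.
have hL'p : 0 < abs L' by apply: abs_neq0.
set del := Num.min eps (Num.min rho (abs L' / (2 * C + 2))).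
have hdel : 0 < del by rewrite !lt_min he hr divr_gt0 //; lra.
have [h /andP [hh0 hhd]] := small_elt habs hdel.
have hhe : abs h < eps by apply: lt_le_trans hhd _; rewrite ge_min lexx.
have hhr : abs h < rho by apply: lt_le_trans hhd _; rewrite !ge_min lexx orbT.
have hhL : abs h < abs L' / (2 * C + 2) by apply: lt_le_trans hhd _; rewrite !ge_min lexx !orbT.
have ea : a + h - a = h by ring.
have e1 : abs (f (a + h) - f a - L' * h) <= 2^-1 * abs L' * abs h.
  by have := h1 (a + h); rewrite ea; apply.
have e2 := h2 h hhr.
have hCh : C * abs h ^+ 2 <= 2^-1 * abs L' * abs h.
  rewrite expr2 mulrA ler_wpM2r ?ge0 //.
  have : (2 * C + 2) * abs h < abs L' by rewrite mulrC -ltr_pdivlMr //; lra.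
  nra.
have hdiff : abs ((L - L') * h) <= 2^-1 * abs L' * abs h.
  have -> : (L - L') * h = (f (a + h) - f a - L' * h) - (f (a + h) - f a - L * h) by ring.
  apply: absB_le => //; apply: le_trans e2 hCh.
apply: (abs_eq_lt habs).
move: hdiff; rewrite absM ler_pM2r // => hd.
apply: le_lt_trans hd _; lra.
Qed.

End Far.


Section Far2.
Variables (R : realType) (K : closedFieldType) (abs : K -> R).
Hypothesis habs : is_nonarch_abs abs.
Hypothesis hcompl : abs_complete abs.

Let ge0 := abs_ge0 habs.
Let abs0 := abs0 habs.
Let absN := absN habs.
Let absM := absM habs.
Let absB := absB habs.
Let absX := absX habs.
Let absV := absV habs.
Let absD_le := absD_le habs.
Let absB_le := absB_le habs.
Let absf_div := absf_div habs.

Lemma far_region (P Q : {poly K}) : Q != 0 -> (size P <= size Q)%N ->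
  (wronsk (revd (ratdeg P Q) P) (revd (ratdeg P Q) Q)).[0] != 0 ->
  exists A0 : R, 1 <= A0 /\ forall a, A0 <= abs a -> forall r, 0 < r -> r <= 1 ->
    (forall x, disk abs a r x -> Q.[x] != 0) /\
    set_bij (disk abs a r) (disk abs (rat_eval P Q a) (abs (rat_deriv P Q a) * r))
            (rat_eval P Q).
Proof.
move=> hQ hsz hWr.
set d := ratdeg P Q.
have hsQ : size Q = d.+1.
  rewrite /d /ratdeg (maxn_idPr hsz) prednK // lt0n size_poly_eq0 //.
have hsP : (size P <= d.+1)%N by rewrite -hsQ.
have hsQ' : (size Q <= d.+1)%N by rewrite hsQ.
set Pr := revd d P; set Qr := revd d Q.
have hQr0 : Qr.[0] != 0.
  rewrite /Qr revd_horner0.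
  have -> : d = (size Q).-1 by rewrite hsQ.
  by rewrite -lead_coefE lead_coef_eq0.
have hq0 : 0 < abs Qr.[0] by apply: abs_neq0.
have hw0 : 0 < abs (wronsk Pr Qr).[0] by apply: abs_neq0.
have [eps0 [he0 he01 hloc]] := local_est habs Pr Qr (lexx (1:R)) hq0 hw0.
have h0A : abs (0:K) <= 1 by rewrite abs0 ler01.
have [hQy hest] := hloc 0 h0A (lexx _) (lexx _).
set L0 := rat_deriv Pr Qr 0.
have hL0 : L0 != 0 by apply: rat_deriv_neq0.
have hL0p : 0 < abs L0 by apply: abs_neq0.
exists (2 + eps0^-1); split.
  have hi : 0 < eps0^-1 by rewrite invr_gt0.
  lra.
move=> a ha r hr hr1.
have hinv : 0 < eps0^-1 by rewrite invr_gt0.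
have ha2 : 2 <= abs a by lra.
have hap : 0 < abs a by lra.
have ha0 : a != 0 by apply/eqP => h0; move: hap; rewrite h0 abs0 ltxx.
have hxa : forall x, abs (x - a) < 1 -> abs x = abs a.
  by move=> x hx; apply: (abs_eq_lt habs); apply: lt_le_trans hx _; lra.
have hx0 : forall x, abs (x - a) < 1 -> x != 0.
  by move=> x hx; apply/eqP => h0; have := hxa x hx; rewrite h0 abs0 => h; move: hap; rewrite -h ltxx.
have hyin : forall x, abs (x - a) < 1 -> abs (x^-1 - 0) < eps0.
  move=> x hx; rewrite subr0 absV hxa //.
  rewrite -[eps0]invrK ltf_pV2 ?posrE ?invr_gt0 //; lra.
have hQx : forall x, abs (x - a) < 1 -> Q.[x] != 0.
  move=> x hx; have hxn := hx0 _ hx.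
  rewrite -(revd_horner hxn hsQ') -/Qr mulf_neq0 //; last by rewrite expf_neq0.
  apply/eqP => h0; have := hQy _ (hyin _ hx); rewrite h0 abs0 => h.
  by move: hq0; rewrite -h ltxx.
have hfx : forall x, abs (x - a) < 1 -> rat_eval P Q x = rat_eval Pr Qr x^-1.
  by move=> x hx; rewrite (rat_eval_revd (hx0 _ hx) hsP hsQ').
set L' := - L0 / a ^+ 2.
have hL' : L' != 0 by rewrite /L' mulf_neq0 ?oppr_eq0 ?invr_eq0 ?expf_neq0.
have hL'abs : abs L' = abs L0 / abs a ^+ 2 by rewrite /L' absf_div absN absX.
have hest' : forall x x', abs (x - a) < 1 -> abs (x' - a) < 1 ->
    abs (rat_eval P Q x - rat_eval P Q x' - L' * (x - x')) <= 2^-1 * abs L' * abs (x - x').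
  move=> x x' hx hx'.
  rewrite !hfx //.
  have hx0' := hx0 _ hx; have hx'0 := hx0 _ hx'.
  set G := rat_eval Pr Qr.
  have split1 : G x^-1 - G x'^-1 - L' * (x - x') =
     (G x^-1 - G x'^-1 - L0 * (x^-1 - x'^-1)) + L0 * ((x - x') * (x * x' - a ^+ 2) / (x * x' * a ^+ 2)).
    rewrite /L'; field; by rewrite hx0' hx'0 ha0.
  rewrite split1; apply: absD_le.
    apply: le_trans (hest _ _ (hyin _ hx) (hyin _ hx')) _.
    have -> : x^-1 - x'^-1 = - (x - x') / (x * x') by field; rewrite hx0' hx'0.
    have hdiv : abs (- (x - x') / (x * x')) = abs (x - x') / (abs a * abs a).
      by rewrite absf_div absN absM (hxa x hx) (hxa x' hx').
    rewrite hdiv -/L0 hL'abs expr2.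
    rewrite le_eqVlt; apply/orP; left; apply/eqP.
    field; rewrite gt_eqF //.
  have hdiv2 : abs ((x - x') * (x * x' - a ^+ 2) / (x * x' * a ^+ 2)) =
      abs (x - x') * abs (x * x' - a ^+ 2) / (abs a * abs a * abs a ^+ 2).
    by rewrite absf_div !absM (hxa x hx) (hxa x' hx') expr2.
  rewrite [abs (L0 * _)]absM hdiv2.
  have hxx : abs (x * x' - a ^+ 2) <= abs a * 1.
    have -> : x * x' - a ^+ 2 = x * (x' - a) + a * (x - a) by ring.
    apply: absD_le; rewrite absM; [rewrite (hxa x hx)|]; apply: ler_wpM2l => //; exact: ltW.
  rewrite hL'abs.
  have ha4 : 0 < abs a * abs a * abs a ^+ 2 by rewrite !mulr_gt0 ?exprn_gt0.
  have hdx := ge0 (x - x').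
  rewrite mulrA mulrA ler_pdivrMr //.
  rewrite mulr1 in hxx.
  have : abs L0 * abs (x - x') * abs (x * x' - a ^+ 2) <= abs L0 * abs (x - x') * abs a.
    by apply: ler_wpM2l => //; apply: mulr_ge0 => //; exact: ltW.
  move=> hh; apply: le_trans hh _.
  have -> : 2^-1 * (abs L0 / abs a ^+ 2) * abs (x - x') * (abs a * abs a * abs a ^+ 2)
     = abs L0 * abs (x - x') * abs a * (2^-1 * abs a).
    by rewrite expr2; field; rewrite gt_eqF.
  rewrite -[X in X <= _]mulr1; apply: ler_wpM2l; last by lra.
  by rewrite !mulr_ge0 //; exact: ltW.
have hQa : Q.[a] != 0 by apply: hQx; rewrite subrr abs0.
have [rho [C [hrho hC htay]]] := taylor_rat habs P hQa.
have huniq : abs (rat_deriv P Q a) = abs L'.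
  apply: (abs_deriv_unique habs (f := rat_eval P Q) (eps := 1) ltr01 hrho hC hL') => //.
  move=> x hx; apply: le_trans (hest' x a hx _) _; first by rewrite subrr abs0.
  by [].
  exact: htay.
split.
  by move=> x hx; apply: hQx; apply: lt_le_trans hx hr1.
rewrite huniq.
apply: (core_bij habs hcompl ltr01 hL') => //.
Qed.
End Far2.


Lemma roots_ball (R : realType) (K : closedFieldType) (abs : K -> R)
  (habs : is_nonarch_abs abs) (P Q : {poly K}) (cs : seq K) :
  (forall c, c \in cs -> berk_fatou abs P Q (Some (typeI abs c))) ->
  exists d : R, 0 < d /\ forall c, c \in cs -> forall w, is_berk abs w ->
     w ('X - c%:P) < d -> berk_fatou abs P Q (Some w).
Proof.
elim: cs => [|c cs IH] hcs.
  by exists 1; split => // c; rewrite in_nil.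
have [d1 [hd1 h1]] := IH (fun c' hc' => hcs c' (ltac:(by rewrite in_cons hc' orbT))).
have [d2 [hd2 h2]] := fatou_typeI_ball habs (hcs c (mem_head _ _)).
exists (Num.min d1 d2); split; first by rewrite lt_min hd1 hd2.
move=> c'; rewrite in_cons => /orP [/eqP ->|hc'] w hw hwd.
  by apply: h2 => //; apply: lt_le_trans hwd _; rewrite ge_min lexx orbT.
by apply: (h1 c') => //; apply: lt_le_trans hwd _; rewrite ge_min lexx.
Qed.

Lemma root_of_factor (K : closedFieldType) (p : {poly K}) (rs : seq K) (c : K) :
  p = lead_coef p *: \prod_(z <- rs) ('X - z%:P) -> c \in rs -> p.[c] = 0.
Proof.
move=> hp hc; rewrite hp hornerZ horner_prod.
have -> : \prod_(z <- rs) ('X - z%:P).[c] = 0.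
  apply/eqP; rewrite prodf_seq_eq0; apply/hasP; exists c => //.
  by rewrite hornerXsubC subrr eqxx.
by rewrite mulr0.
Qed.

Unset Implicit Arguments.

Theorem lemma4p3 (R : realType) (K : closedFieldType) (abs : K -> R)
  (habs : is_nonarch_abs abs) (hcompl : abs_complete abs)
  (hchar : [pchar K] =i pred0)
  (P Q : {poly K}) (hQ : Q != 0) (hcop : coprimep P Q)
  (hnc : (1 <= ratdeg P Q)%N)
  (hpoles : forall x : option K, is_pole P Q x ->
              berk_fatou abs P Q (typeI_P1 abs x))
  (hcrit : forall x : option K, is_crit P Q x ->
              berk_fatou abs P Q (typeI_P1 abs x)) :
  exists eps : R, 0 < eps /\
    forall a : K,
      (exists z, berk_disk abs a eps z /\ berk_julia abs P Q (Some z)) ->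
      forall r : R, 0 < r -> r <= eps ->
        (forall x, disk abs a r x -> Q.[x] != 0) /\
        set_bij (disk abs a r)
                (disk abs (rat_eval P Q a) (abs (rat_deriv P Q a) * r))
                (rat_eval P Q).
Proof.
set W := wronsk P Q.
have hW : W != 0 by apply: wronsk_neq0.
have [rsQ hrsQ] := closed_field_poly_normal Q.
have [rsW hrsW] := closed_field_poly_normal W.
have hfat : forall c, c \in rsQ ++ rsW -> berk_fatou abs P Q (Some (typeI abs c)).
  move=> c; rewrite mem_cat => /orP [hc|hc].
    apply: (hpoles (Some c)); rewrite /is_pole /=.
    by rewrite (root_of_factor hrsQ hc) eqxx.
  apply: (hcrit (Some c)); rewrite /is_crit /root -/W.
  by rewrite (root_of_factor hrsW hc).
have [del [hdel hdelF]] := roots_ball habs hfat.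
set d' := Num.min 1 (del / 2).
have hd' : 0 < d' by rewrite lt_min ltr01 divr_gt0.
have hd'1 : d' <= 1 by rewrite ge_min lexx.
have hd'2 : d' <= del / 2 by rewrite ge_min lexx orbT.
have hlQ : 0 < abs (lead_coef Q) by apply: (abs_neq0 habs); rewrite lead_coef_eq0.
have hlW : 0 < abs (lead_coef W) by apply: (abs_neq0 habs); rewrite lead_coef_eq0.
set q0 := abs (lead_coef Q) * d' ^+ size rsQ.
set w0 := abs (lead_coef W) * d' ^+ size rsW.
have hq0 : 0 < q0 by rewrite mulr_gt0 ?exprn_gt0.
have hw0 : 0 < w0 by rewrite mulr_gt0 ?exprn_gt0.
have [A [hA1 hfar]] : exists A : R, 1 <= A /\
   ((forall (z : {poly K} -> R) (a : K), is_berk abs z -> ~ berk_fatou abs P Q (Some z) ->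
       z ('X - a%:P) < 1 -> abs a <= A) \/
    (forall a, A <= abs a -> forall r, 0 < r -> r <= 1 ->
       (forall x, disk abs a r x -> Q.[x] != 0) /\
       set_bij (disk abs a r) (disk abs (rat_eval P Q a) (abs (rat_deriv P Q a) * r))
            (rat_eval P Q))).
  case: (pselect (is_pole P Q None \/ is_crit P Q None)) => hinf.
    have hfN : berk_fatou abs P Q None.
      by case: hinf => h; [exact: (hpoles None h)|exact: (hcrit None h)].
    have [M hM] := fatou_inf hfN.
    exists (Num.max 1 (M + 1)); split; first by rewrite le_max lexx.
    left => z a hz hnf hza.
    have hzX : z 'X <= M by rewrite leNgt; apply/negP => hlt; apply: hnf; exact: hM.
    have : abs a <= z 'X + z ('X - a%:P).
      rewrite -(wC hz a).
      have e : (a%:P : {poly K}) = 'X - ('X - a%:P) by ring.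
      rewrite {1}e; exact: (wB habs hz).
    move=> h; rewrite le_max; apply/orP; right; lra.
  have hnp : ~ is_pole P Q None by move=> h; apply: hinf; left.
  have hnc' : ~ is_crit P Q None by move=> h; apply: hinf; right.
  have hsz : (size P <= size Q)%N.
    rewrite leqNgt; apply/negP => hlt; apply: hnp; by rewrite /is_pole /= hlt.
  have hWr : (wronsk (revd (ratdeg P Q) P) (revd (ratdeg P Q) Q)).[0] != 0.
    by apply/negP => h; apply: hnc'; rewrite /is_crit /root.
  have [A0 [hA0 hA0f]] := far_region habs hcompl hQ hsz hWr.
  by exists A0; split => //; right.
have [eps0 [he0 he01 hloc]] := local_est habs P Q hA1 hq0 hw0.
exists (Num.min d' eps0); split; first by rewrite lt_min hd' he0.
move=> a [z [[hz hza] [_ hnf]]] r hr hre.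
have hre0 : r <= eps0 by apply: le_trans hre _; rewrite ge_min lexx orbT.
have hzad : z ('X - a%:P) < d' by apply: lt_le_trans hza _; rewrite ge_min lexx.
have hdist : forall c, c \in rsQ ++ rsW -> d' <= abs (a - c).
  move=> c hc; rewrite leNgt; apply/negP => hlt.
  apply: hnf; apply: (hdelF c hc) => //.
  have -> : 'X - c%:P = ('X - a%:P) + (a - c)%:P by rewrite polyCB; ring.
  apply: le_lt_trans (wD hz _ _) _; rewrite (wC hz); lra.
have hQa : q0 <= abs Q.[a].
  apply: (root_prod_bound habs hrsQ (ltW hd')) => c hc; apply: hdist; by rewrite mem_cat hc.
have hWa : w0 <= abs W.[a].
  apply: (root_prod_bound habs hrsW (ltW hd')) => c hc; apply: hdist; by rewrite mem_cat hc orbT.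
have hQa0 : Q.[a] != 0 by apply/eqP => h0; move: hQa; rewrite h0 (abs0 habs); lra.
have hWa0 : W.[a] != 0 by apply/eqP => h0; move: hWa; rewrite h0 (abs0 habs); lra.
have near : abs a <= A -> (forall x, disk abs a r x -> Q.[x] != 0) /\
        set_bij (disk abs a r) (disk abs (rat_eval P Q a) (abs (rat_deriv P Q a) * r))
                (rat_eval P Q).
  move=> haA; have [hQx hest] := hloc a haA hQa hWa.
  exact: (near_concl habs hcompl he0 hQa0 hWa0 hQx hest hr hre0).
case: hfar => [hb|hf].
  apply: near; apply: (hb z) => //; apply: lt_le_trans hzad hd'1.
have [haA|haA] := leP (abs a) A; first exact: near.
apply: hf; [exact: ltW|exact: hr|].
apply: le_trans hre _; apply: le_trans hd'1; rewrite ge_min lexx //.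
Qed.
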